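(* Let $m,p,n$ be positive integers with $p\mid m$. The codimension atoms of $G(m,p,n)$ are exactly the reflections in $G(m,p,n)$ together with the $p$-connected elements of $G(m,p,n)$, excluding those $p$-connected elements $g$ with $\operatorname{codim}(g)=2$ and $\det(g)=1$.
   Context: $\zeta_m=e^{2\pi i/m}$. $G(m,1,n)$ is the group of $n\times n$ monomial matrices whose nonzero entries are $m$-th roots of unity, acting on $V=\mathbb{C}^n$; for $p\mid m$, $G(m,p,n)$ is the subgroup of elements whose nonzero entries multiply to an $(m/p)$-th root of unity. A reflection is an element of finite order fixing a hyperplane pointwise. $\operatorname{codim}(g)=n-\dim\{v\in V:gv=v\}$; the codimension order is $a\le_\perp c$ iff $\operatorname{codim}(a)+\operatorname{codim}(a^{-1}c)=\operatorname{codim}(c)$, and a codimension atom is an element covering the identity in this poset. A diagonal matrix $g\ne 1$ whose non-1 eigenvalues (with multiplicity) are $\zeta_m^{c_1},\dots,\zeta_m^{c_k}$ is $p$-connected if $p\mid c_1+\dots+c_k$ but $p\nmid\sum_{i\in I}c_i$ for every nonempty proper subset $I\subsetneq\{1,\dots,k\}$. *)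

(* Defs.v *)
From mathcomp Require Import all_boot all_order all_algebra all_fingroup all_field.
Set Implicit Arguments. Unset Strict Implicit. Unset Printing Implicit Defensive.
Import GRing.Theory Num.Theory.
Local Open Scope ring_scope.

(* Matrices act on column vectors V = algC^n : v |-> g *m v. *)

Definition inGmpn (m p : nat) {n : nat} (g : 'M[algC]_n) : Prop :=
  exists s : 'S_n,
    (forall i j, j != s i -> g i j = 0) /\
    (forall i, m.-unity_root (g i (s i))) /\
    (m %/ p)%N.-unity_root (\prod_i g i (s i)).

(* dimension of the fixed space {v : g v = v}; a column vector v with g v = v
   is the transpose of a row vector in the left kernel of g^T - 1. *)
Definition fixdim n (g : 'M[algC]_n) : nat := \rank (kermx (g^T - 1%:M)).
Definition codim n (g : 'M[algC]_n) : nat := (n - fixdim g)%N.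

Definition le_codim n (a c : 'M[algC]_n) : Prop :=
  (codim a + codim (invmx a *m c))%N = codim c.

Definition codim_atom n (G : 'M[algC]_n -> Prop) (a : 'M[algC]_n) : Prop :=
  [/\ G a, le_codim 1%:M a, a <> 1%:M &
      forall b, G b -> le_codim 1%:M b -> le_codim b a -> b <> 1%:M -> b = a].

Definition mxpow n (g : 'M[algC]_n) (k : nat) : 'M[algC]_n := iter k (mulmx g) 1%:M.

Definition reflection n (g : 'M[algC]_n) : Prop :=
  (exists k, (0 < k)%N /\ mxpow g k = 1%:M) /\ fixdim g = n.-1.

Definition pconnected (m p : nat) (zeta : algC) n (g : 'M[algC]_n) : Prop :=
  is_diag_mx g /\ g <> 1%:M /\
  exists c : 'I_n -> nat,
    (forall i, g i i = zeta ^+ c i) /\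
    let I := [set i | g i i != 1] in
    (p %| \sum_(i in I) c i)%N /\
    (forall J : {set 'I_n}, J \proper I -> J != set0 -> ~~ (p %| \sum_(i in J) c i)%N).

(* Main.v *)
Require Import Defs.
From mathcomp Require Import all_boot all_order all_algebra all_fingroup all_field.
From mathcomp Require Import zify.
Set Implicit Arguments. Unset Strict Implicit. Unset Printing Implicit Defensive.
Import GRing.Theory Num.Theory.
Local Open Scope ring_scope.

Section Basic.
Variable n : nat.
Implicit Types g a b c : 'M[algC]_n.

Definition Kf g := kermx ((g - 1%:M)^T).

Lemma rank_Kf g : \rank (Kf g) = subn n (\rank (g - 1%:M)).
Proof. by rewrite /Kf mxrank_ker mxrank_tr. Qed.

Lemma codimE g : codim g = \rank (g - 1%:M).
Proof.
rewrite /codim /fixdim mxrank_ker.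
have -> : g^T - 1%:M = (g - 1%:M)^T by rewrite linearB /= trmx1.
rewrite mxrank_tr; have := rank_leq_row (g - 1%:M); lia.
Qed.

Lemma fixdimE g : fixdim g = subn n (\rank (g - 1%:M)).
Proof.
rewrite /fixdim mxrank_ker.
have -> : g^T - 1%:M = (g - 1%:M)^T by rewrite linearB /= trmx1.
by rewrite mxrank_tr.
Qed.

Lemma rank0_eq1 g : \rank (g - 1%:M) = 0%N -> g = 1%:M.
Proof. by move/eqP; rewrite mxrank_eq0 subr_eq0 => /eqP. Qed.

Lemma rank1_0 : \rank (1%:M - 1%:M : 'M[algC]_n) = 0%N.
Proof. by rewrite subrr mxrank0. Qed.

Lemma subadd a b : leq (\rank (a *m b - 1%:M)) (addn (\rank (a - 1%:M)) (\rank (b - 1%:M))).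
Proof.
have -> : a *m b - 1%:M = a *m (b - 1%:M) + (a - 1%:M).
  by rewrite mulmxBr mulmx1 addrA subrK.
rewrite addnC; apply: leq_trans (mxrank_add _ _) _.
by rewrite leq_add2r mxrankM_maxr.
Qed.

Lemma memKf m (A : 'M_(m, n)) g : (A <= Kf g)%MS = ((g - 1%:M) *m A^T == 0).
Proof.
rewrite /Kf sub_kermx.
by apply/eqP/eqP => H; have := congr1 trmx H; rewrite trmx_mul ?trmxK trmx0.
Qed.

Lemma memKfv (v : 'cV[algC]_n) g : (v^T <= Kf g)%MS = (g *m v == v).
Proof. by rewrite memKf trmxK mulmxBl mul1mx subr_eq0. Qed.

Lemma le_codim1 b : le_codim 1%:M b.
Proof. by rewrite /le_codim invmx1 mul1mx !codimE rank1_0. Qed.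

End Basic.

Section Decomp.
Variable n : nat.
Implicit Types g a b c : 'M[algC]_n.

Lemma cap_sub b c : b \in unitmx ->
  ((Kf b :&: Kf (invmx b *m c)) <= Kf c)%MS.
Proof.
move=> bu; set A := (_ :&: _)%MS.
have h1 : (A <= Kf b)%MS by apply: capmxSl.
have h2 : (A <= Kf (invmx b *m c))%MS by apply: capmxSr.
rewrite memKf in h1; rewrite memKf in h2; rewrite memKf.
have -> : c - 1%:M = b *m (invmx b *m c - 1%:M) + (b - 1%:M).
  by rewrite mulmxBr mulKVmx // mulmx1 addrA subrK.
by rewrite mulmxDl -mulmxA (eqP h2) (eqP h1) mulmx0 addr0.
Qed.

Lemma decomp b c : b \in unitmx ->
  addn (\rank (b - 1%:M)) (\rank (invmx b *m c - 1%:M)) = \rank (c - 1%:M) ->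
  forall x : 'cV[algC]_n, exists v w : 'cV[algC]_n,
    [/\ b *m v = v, c *m w = b *m w & x = v + w].
Proof.
move=> bu hr x.
have hc := mxrankS (cap_sub c bu).
set d := invmx b *m c in hc hr *.
have hs := mxrank_sum_cap (Kf b) (Kf d).
rewrite !rank_Kf in hs hc.
have full : row_full (Kf b + Kf d)%MS.
  have h1 := rank_leq_row (b - 1%:M); have h2 := rank_leq_row (d - 1%:M).
  have h3 := rank_leq_row (c - 1%:M); have h4 := rank_leq_col (Kf b + Kf d)%MS.
  rewrite /row_full eqn_leq h4 /=.
  clearbody d. move: hr hs hc h1 h2 h3 h4.
  move: (\rank (b - 1%:M)) (\rank (d - 1%:M)) (\rank (c - 1%:M)) (\rank (Kf b + Kf d)%MS) (\rank (Kf b :&: Kf d)%MS) => *. lia.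
have /sub_addsmxP [[u1 u2] /= hx] : (x^T <= Kf b + Kf d)%MS by apply: submx_full.
exists (u1 *m Kf b)^T, (u2 *m Kf d)^T; split.
- by apply/eqP; rewrite -memKfv trmxK submxMl.
- have : ((u2 *m Kf d)^T^T <= Kf d)%MS by rewrite trmxK submxMl.
  rewrite memKfv /d => /eqP /(congr1 (mulmx b)).
  by rewrite !mulmxA mulmxV // mul1mx.
- by rewrite -linearD /= -hx trmxK.
Qed.

Lemma suff_le b c : b \in unitmx ->
  (forall v : 'cV[algC]_n, c *m v = v -> b *m v = v) ->
  (forall k : 'I_n, exists v w : 'cV[algC]_n,
    [/\ b *m v = v, c *m w = b *m w & delta_mx k 0 = v + w]) ->
  addn (\rank (b - 1%:M)) (\rank (invmx b *m c - 1%:M)) = \rank (c - 1%:M).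
Proof.
move=> bu H1 H2; set d := invmx b *m c.
have hsub := subadd b d.
have ebd : b *m d = c by rewrite /d mulKVmx.
rewrite ebd in hsub.
have hs := mxrank_sum_cap (Kf b) (Kf d).
have fixd : forall v : 'cV[algC]_n, c *m v = b *m v -> d *m v = v.
  by move=> v h; rewrite /d -mulmxA h mulmxA mulVmx // mul1mx.
have hcap : (Kf c <= Kf b :&: Kf d)%MS.
  apply/row_subP => i; rewrite sub_capmx.
  have : ((row i (Kf c))^T^T <= Kf c)%MS by rewrite trmxK row_sub.
  rewrite memKfv => /eqP hc.
  rewrite -[row i _]trmxK !memKfv; have hb := H1 _ hc.
  by rewrite hb eqxx /= fixd // hb hc.
have hfull : (1%:M <= Kf b + Kf d)%MS.
  apply/row_subP => k; rewrite row1 -trmx_delta.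
  have [v [w [hv hw ->]]] := H2 k.
  rewrite linearD /=; apply: addmx_sub_adds; rewrite memKfv; apply/eqP => //.
  exact: fixd.
have h5 := mxrankS hcap; have h6 := mxrankS hfull; rewrite mxrank1 in h6.
have h4 := rank_leq_col (Kf b + Kf d)%MS.
rewrite !rank_Kf in hs h5.
have h1 := rank_leq_row (b - 1%:M); have h2 := rank_leq_row (d - 1%:M).
have h3 := rank_leq_row (c - 1%:M).
clearbody d. move: hsub hs h1 h2 h3 h4 h5 h6.
move: (\rank (b - 1%:M)) (\rank (d - 1%:M)) (\rank (c - 1%:M)) (\rank (Kf b + Kf d)%MS) (\rank (Kf b :&: Kf d)%MS) => *. lia.
Qed.

End Decomp.

Section Mono.
Variable n : nat.

Lemma mono_mul (g : 'M[algC]_n) (s : 'S_n) p (h : 'M[algC]_(n, p)) :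
  (forall i j, j != s i -> g i j = 0) ->
  forall a b, (g *m h) a b = g a (s a) * h (s a) b.
Proof.
move=> H a b; rewrite mxE (bigD1 (s a)) //= big1 ?addr0 // => j hj.
by rewrite H ?mul0r.
Qed.

Lemma diag_mul (g : 'M[algC]_n) p (h : 'M[algC]_(n, p)) :
  (forall i j, i != j -> g i j = 0) ->
  forall a b, (g *m h) a b = g a a * h a b.
Proof.
move=> H a b; rewrite (@mono_mul g 1) ?perm1 // => i j; rewrite perm1 eq_sym; exact: H.
Qed.

Lemma unity_neq0 m (x : algC) : (0 < m)%N -> m.-unity_root x -> x != 0.
Proof.
move=> m0; rewrite unity_rootE; apply: contraTneq => ->.
by rewrite expr0n eqn0Ngt m0 /= eq_sym oner_eq0.
Qed.

Lemma mono_unit m (g : 'M[algC]_n) (s : 'S_n) :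
  (0 < m)%N -> (forall i j, j != s i -> g i j = 0) ->
  (forall i, m.-unity_root (g i (s i))) -> g \in unitmx.
Proof.
move=> m0 H Hr.
pose B : 'M[algC]_n := \matrix_(a, k) if a == s k then (g k a)^-1 else 0.
suff /mulmx1_unit [] : g *m B = 1%:M by [].
apply/matrixP => i k; rewrite (mono_mul _ H) !mxE.
case: (eqVneq i k) => [->|ik]; first by rewrite eqxx mulfV // (unity_neq0 m0).
by rewrite (inj_eq perm_inj) (negbTE ik) mulr0.
Qed.

Lemma inG_unit m p (g : 'M[algC]_n) : (0 < m)%N -> inGmpn m p g -> g \in unitmx.
Proof. by move=> m0 [s [H [Hr _]]]; exact: (mono_unit m0 H Hr). Qed.

Definition Tm (i j : 'I_n) (x : algC) : 'M[algC]_n :=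
  \matrix_(a, b) if a == i then (b == j)%:R * x
                 else if a == j then (b == i)%:R * x^-1 else (a == b)%:R.

Variables (i j : 'I_n) (x : algC).
Hypotheses (ij : i != j) (x0 : x != 0).

Lemma T_supp a b : b != tperm i j a -> Tm i j x a b = 0.
Proof.
rewrite /Tm mxE; case: tpermP => [->|->|/eqP ai /eqP aj]; rewrite ?eqxx.
- by move/negbTE->; rewrite mul0r.
- rewrite (eq_sym j i) (negbTE ij) => /negbTE->; by rewrite mul0r.
- by rewrite (negbTE ai) (negbTE aj) eq_sym => /negbTE->.
Qed.

Lemma T_ent a : Tm i j x a (tperm i j a) =
  if a == i then x else if a == j then x^-1 else 1.
Proof.
rewrite /Tm mxE; case: tpermP => [->|->|/eqP ai /eqP aj]; rewrite ?eqxx ?mul1r //.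
- by rewrite (eq_sym j i) (negbTE ij).
- by rewrite (negbTE ai) (negbTE aj).
Qed.

Lemma T_sq : Tm i j x *m Tm i j x = 1%:M.
Proof.
apply/matrixP => a b; rewrite (mono_mul _ T_supp) T_ent !mxE.
case: tpermP => [->|->|/eqP ai /eqP aj].
- by rewrite !eqxx (eq_sym j i) (negbTE ij) mulrCA mulfV // mulr1 eq_sym.
- by rewrite !eqxx (eq_sym j i) (negbTE ij) mulrCA mulVf // mulr1 eq_sym.
- by rewrite (negbTE ai) (negbTE aj) mul1r.
Qed.

Lemma T_rank : \rank (Tm i j x - 1%:M) = 1%N.
Proof.
apply/eqP; rewrite eqn_leq; apply/andP; split.
  pose u : 'cV[algC]_n := \col_a (if a == i then 1 else if a == j then - x^-1 else 0).
  pose w : 'rV[algC]_n := \row_b (if b == i then -1 else if b == j then x else 0).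
  have -> : Tm i j x - 1%:M = u *m w.
    apply/matrixP => a b; rewrite !mxE big_ord1 !mxE.
    case: (eqVneq a i) => [->|ai].
      rewrite mul1r; case: (eqVneq b i) => [->|bi].
        by rewrite ?eqxx (negbTE ij) mul0r sub0r.
      by case: (b == j); rewrite ?mul1r ?mul0r subr0.
    case: (eqVneq a j) => [->|aj].
      case: (eqVneq b i) => [->|bi].
        by rewrite (eq_sym j i) (negbTE ij) mul1r subr0 mulrN mulr1 opprK.
      by rewrite mul0r sub0r eq_sym; case: (b == j); rewrite ?mulr0 ?mulNr ?mulVf ?oppr0.
    by rewrite subrr mul0r.
  exact: leq_trans (mxrankM_maxr _ _) (rank_leq_row _).
rewrite lt0n mxrank_eq0 subr_eq0; apply/eqP => /matrixP /(_ i i).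
by rewrite !mxE !eqxx (negbTE ij) mul0r => /eqP; rewrite eq_sym oner_eq0.
Qed.

End Mono.

Section D.
Variable n : nat.

Lemma rank_sum_le (S : {set 'I_n}) (F : 'I_n -> 'M[algC]_n) :
  (\rank (\sum_(k in S) F k)%R <= \sum_(k in S) \rank (F k))%N.
Proof.
apply: (big_rec2 (fun (A : 'M[algC]_n) (r : nat) => (\rank A <= r)%N)).
  by rewrite mxrank0.
move=> k A r _ h /=; apply: (leq_trans (mxrank_add (F k) A)); by rewrite leq_add2l.
Qed.

Lemma rank_diag (D : 'M[algC]_n) : (forall a b, a != b -> D a b = 0) ->
  \rank D = #|[set k | D k k != 0]|.
Proof.
move=> HD; set S := [set k | D k k != 0].
apply/eqP; rewrite eqn_leq; apply/andP; split.
  have -> : D = \sum_(k in S) D k k *: delta_mx k k.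
    apply/matrixP => a b; rewrite summxE.
    case: (eqVneq a b) => [<-|ab].
      case: (boolP (a \in S)) => aS.
        rewrite (bigD1 a) //= big1 ?addr0; first by rewrite !mxE !eqxx mulr1.
        by move=> k /andP [_ ka]; rewrite !mxE (eq_sym a k) (negbTE ka) mulr0.
      rewrite big1 => [|k kS]; last first.
        by rewrite !mxE; case: (eqVneq a k) => [ak|]; [rewrite ak kS in aS | rewrite mulr0].
      by move: aS; rewrite inE negbK => /eqP.
    rewrite HD // big1 // => k _; rewrite !mxE.
    case: (eqVneq a k) => [<-|]; last by rewrite mulr0.
    by rewrite (eq_sym b a) (negbTE ab) andbF mulr0.
  apply: leq_trans (rank_sum_le _ _) _.
  rewrite -sum1_card; apply: leq_sum => k _.
  by apply: leq_trans (mxrankS (scalemx_sub _ (submx_refl _))) _; rewrite mxrank_delta.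
pose X : 'M[algC]_(#|S|, n) := \matrix_(q, j) (j == enum_val q)%:R.
pose Y : 'M[algC]_(n, #|S|) := \matrix_(j, q) ((j == enum_val q)%:R / D j j).
have XD : forall q l, (X *m D) q l = D (enum_val q) l.
  move=> q l; rewrite mxE (bigD1 (enum_val q)) //= big1 ?addr0.
    by rewrite mxE eqxx mul1r.
  by move=> j jq; rewrite mxE (negbTE jq) mul0r.
have E : X *m D *m Y = 1%:M.
  apply/matrixP => q1 q2; rewrite mxE (bigD1 (enum_val q1)) //= big1 ?addr0.
    have hS : enum_val q1 \in S by apply: enum_valP.
    rewrite XD !mxE (inj_eq enum_val_inj) mulrCA mulfV ?mulr1 //.
    by move: hS; rewrite inE.
  by move=> l lq; rewrite XD HD ?mul0r // eq_sym.
have := mxrank1 algC #|S|; rewrite -E => <-.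
exact: leq_trans (mxrankM_maxl _ _) (mxrankM_maxr _ _).
Qed.

End D.

Lemma unity_div (m p N : nat) (z : algC) : (0 < m)%N -> (0 < p)%N -> (p %| m)%N ->
  m.-primitive_root z -> (m %/ p)%N.-unity_root (z ^+ N) = (p %| N)%N.
Proof.
move=> m0 p0 pm hz; rewrite unity_rootE -exprM -(prim_order_dvd hz).
have q0 : (0 < m %/ p)%N by rewrite divn_gt0 // dvdn_leq.
by rewrite -{1}(divnK pm) [(N * _)%N]mulnC dvdn_pmul2l.
Qed.

Section T.
Variable n : nat.
Variables (i j : 'I_n) (x : algC).
Hypotheses (ij : i != j) (x0 : x != 0).

Lemma T_inG m p : (0 < m)%N -> x ^+ m = 1 -> inGmpn m p (Tm i j x).
Proof.
move=> m0 xm; exists (tperm i j); split; first exact: T_supp.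
split.
  move=> a; rewrite T_ent // unity_rootE.
  case: ifP => _; first by rewrite xm.
  by case: ifP => _; rewrite ?exprVn ?xm ?invr1 ?expr1n.
have -> : \prod_a Tm i j x a (tperm i j a) = 1.
  rewrite (bigD1 i) //= (bigD1 j) /=; last by rewrite eq_sym.
  rewrite big1 ?mulr1.
    by rewrite !T_ent // eqxx (eq_sym j i) (negbTE ij) eqxx mulfV.
  by move=> a /andP [ai aj]; rewrite T_ent // (negbTE ai) (negbTE aj).
by rewrite unity_rootE expr1n.
Qed.

Lemma T_fixes (c : 'M[algC]_n) (s : 'S_n) (v : 'cV[algC]_n) :
  (forall a b, b != s a -> c a b = 0) -> s i = j -> x = c i j ->
  c *m v = v -> Tm i j x *m v = v.
Proof.
move=> Hc sij xc hv; apply/matrixP => a k.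
have hv' : forall a, v a k = c a (s a) * v (s a) k.
  by move=> b; rewrite -{1}hv (mono_mul _ Hc).
rewrite (mono_mul _ (T_supp x ij)) T_ent //.
case: tpermP => [->|->|/eqP ai /eqP aj].
- by rewrite eqxx (hv' i) sij xc.
- rewrite eqxx (eq_sym j i) (negbTE ij) (hv' i) sij -xc mulrA mulVf ?mul1r //.
- by rewrite (negbTE ai) (negbTE aj) mul1r.
Qed.

Lemma T_newfix (c : 'M[algC]_n) (s : 'S_n) :
  (forall a b, b != s a -> c a b = 0) -> s i = j -> x = c i j ->
  Tm i j x *m (c *m (delta_mx j 0 : 'cV[algC]_n)) = (delta_mx j 0 : 'cV[algC]_n) /\ c *m (delta_mx j 0 : 'cV[algC]_n) != (delta_mx j 0 : 'cV[algC]_n).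
Proof.
move=> Hc sij xc.
have sjj : s j != j by rewrite -{2}sij (inj_eq perm_inj) eq_sym.
split.
  apply/matrixP => a k; rewrite (mono_mul _ (T_supp x ij)) T_ent // (mono_mul _ Hc) !mxE.
  case: tpermP => [->|->|/eqP ai /eqP aj].
  - by rewrite eqxx (negbTE sjj) (negbTE ij) /= !mulr0.
  - by rewrite eqxx (eq_sym j i) (negbTE ij) sij eqxx -xc mulrA mulVf ?mul1r.
  - rewrite (negbTE ai) (negbTE aj) -{1}sij (inj_eq perm_inj) (negbTE ai) /=.
    by rewrite !mulr0.
apply/negP => /eqP /matrixP /(_ j 0); rewrite (mono_mul _ Hc) !mxE (negbTE sjj) /= mulr0.
by rewrite !eqxx /= => /eqP; rewrite eq_sym oner_eq0.
Qed.

End T.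

Section F.
Variable n : nat.
Implicit Types c : 'M[algC]_n.

Lemma diag_codim c : (forall a b, a != b -> c a b = 0) ->
  codim c = #|[set k | c k k != 1]|.
Proof.
move=> H; rewrite codimE rank_diag.
  by apply: eq_card => k; rewrite !inE !mxE eqxx subr_eq0.
by move=> a b ab; rewrite !mxE H // (negbTE ab) subr0.
Qed.

Lemma diag_det c : (forall a b, a != b -> c a b = 0) -> \det c = \prod_k c k k.
Proof.
move=> H; have -> : c = diag_mx (\row_(k < n) c k k).
  apply/matrixP => a b; rewrite !mxE; case: (eqVneq a b) => [->|ab]; first by rewrite mulr1n.
  by rewrite H // mulr0n.
rewrite det_diag; apply: eq_bigr => k _; by rewrite !mxE eqxx mulr1n.
Qed.

Lemma prod_I c : \prod_k c k k = \prod_(k in [set k | c k k != 1]) c k k.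
Proof.
rewrite [RHS]big_mkcond; apply: eq_bigr => k _; rewrite inE.
by case: (eqVneq (c k k) 1).
Qed.

Lemma pow_sum (z : algC) (F : 'I_n -> algC) (e : 'I_n -> nat) (J : {set 'I_n}) :
  (forall k, F k = z ^+ e k) -> \prod_(k in J) F k = z ^+ (\sum_(k in J) e k).
Proof. by move=> H; rewrite -prodrXr; apply: eq_bigr => k _. Qed.

Lemma Kf_sub c (d : 'M[algC]_n) : (forall v : 'cV[algC]_n, c *m v = v -> d *m v = v) ->
  (Kf c <= Kf d)%MS.
Proof.
move=> H; apply/row_subP => i; set u := row i (Kf c).
have : (u^T^T <= Kf c)%MS by rewrite trmxK row_sub.
by rewrite memKfv => /eqP /H /eqP; rewrite -memKfv trmxK.
Qed.

Lemma unit_inv_self (t : 'M[algC]_n) : t *m t = 1%:M -> invmx t = t.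
Proof.
move=> tt; have tu : t \in unitmx by case: (mulmx1_unit tt).
by rewrite -[invmx t]mulmx1 -tt mulmxA mulVmx // mul1mx.
Qed.

End F.

Section Main.
Variables (m p n : nat) (zeta : algC).
Hypotheses (m0 : (0 < m)%N) (p0 : (0 < p)%N) (n0 : (0 < n)%N) (pm : (p %| m)%N)
  (hz : m.-primitive_root zeta).

Lemma refl_atom (g : 'M[algC]_n) : inGmpn m p g -> reflection g ->
  codim_atom (inGmpn m p) g.
Proof.
move=> Gg [_ hfd].
have rg : \rank (g - 1%:M) = 1%N.
  move: hfd; rewrite fixdimE; have := rank_leq_row (g - 1%:M).
  move: (\rank _) => r; lia.
split => //; first exact: le_codim1.
  by move=> g1; move: rg; rewrite g1 rank1_0.
move=> b Gb _; rewrite /le_codim !codimE rg => hle b1.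
have bu := inG_unit m0 Gb.
have rb : leq 1 (\rank (b - 1%:M)).
  by rewrite lt0n; apply/negP => /eqP /rank0_eq1.
have : \rank (invmx b *m g - 1%:M) = 0%N.
  move: hle rb; move: (\rank (b - 1%:M)) (\rank (invmx b *m g - 1%:M)) => x y; lia.
move/rank0_eq1 => h.
by rewrite -[g](mulKVmx bu) h mulmx1.
Qed.

End Main.

Section Main.
Variables (m p n : nat) (zeta : algC).
Hypotheses (m0 : (0 < m)%N) (p0 : (0 < p)%N) (n0 : (0 < n)%N) (pm : (p %| m)%N)
  (hz : m.-primitive_root zeta).

Lemma T_facts (i j : 'I_n) (x : algC) : i != j -> x != 0 ->
  let t := Tm i j x in
  [/\ t \in unitmx, invmx t = t, \rank (t - 1%:M) = 1%N, t <> 1%:M & reflection t].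
Proof.
move=> ij x0 t.
have tt : t *m t = 1%:M by apply: T_sq.
have rt : \rank (t - 1%:M) = 1%N by apply: T_rank.
split => //; first by case: (mulmx1_unit tt).
- exact: unit_inv_self.
- by move=> t1; move: rt; rewrite t1 rank1_0.
split; first by exists 2%N; split => //; rewrite /mxpow /= mulmx1.
by rewrite fixdimE rt subn1.
Qed.

Lemma nondiag_case (c : 'M[algC]_n) (s : 'S_n) (i : 'I_n) :
  codim_atom (inGmpn m p) c ->
  (forall a b, b != s a -> c a b = 0) -> (forall a, m.-unity_root (c a (s a))) ->
  s i != i -> reflection c.
Proof.
move=> [Gc _ c1 Hat] Hs Hr si.
set j := s i; set x := c i j.
have ij : i != j by rewrite eq_sym.
have x0 : x != 0 by apply: (unity_neq0 m0); exact: Hr.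
have xm : x ^+ m = 1 by apply/eqP; rewrite -unity_rootE; exact: Hr.
have [tu invt rt t1 reft] := T_facts ij x0.
set t := Tm i j x in tu invt rt t1 reft.
have tG : inGmpn m p t by apply: T_inG.
have hsub := subadd t (t *m c).
have ett : t *m (t *m c) = c by rewrite mulmxA T_sq // mul1mx.
rewrite ett rt in hsub.
have [hnew hnot] := T_newfix ij x0 Hs (erefl j) (erefl x).
have hlt : (Kf c < Kf (t *m c))%MS.
  rewrite ltmxE; apply/andP; split.
    apply: Kf_sub => v hv; rewrite -mulmxA hv.
    exact: (T_fixes ij x0 Hs (erefl j) (erefl x) hv).
  apply/negP => hK.
  have : ((delta_mx j 0 : 'cV[algC]_n)^T <= Kf (t *m c))%MS.
    by rewrite memKfv -mulmxA hnew.
  move/(submx_trans)/(_ hK); rewrite memKfv; exact/negP.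
have hr := rank_ltmx hlt; rewrite !rank_Kf in hr.
have hle : le_codim t c.
  rewrite /le_codim !codimE invt rt.
  have := rank_leq_row (c - 1%:M); have := rank_leq_row (t *m c - 1%:M).
  move: hsub hr; move: (\rank (c - 1%:M)) (\rank (t *m c - 1%:M)) => a b; lia.
by rewrite -(Hat t tG (le_codim1 t) hle t1).
Qed.

End Main.

Section Main.
Variables (m p n : nat) (zeta : algC).
Hypotheses (m0 : (0 < m)%N) (p0 : (0 < p)%N) (n0 : (0 < n)%N) (pm : (p %| m)%N)
  (hz : m.-primitive_root zeta).

Lemma zeta_neq0 : zeta != 0.
Proof.
apply: (unity_neq0 m0); rewrite unity_rootE; apply/eqP; exact: prim_expr_order.
Qed.

Lemma exps (c : 'M[algC]_n) : (forall a, m.-unity_root (c a a)) ->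
  exists e : 'I_n -> nat, forall k, c k k = zeta ^+ e k /\ (c k k = 1 -> e k = 0%N).
Proof.
move=> Hr.
suff H : forall k, exists e : nat, c k k = zeta ^+ e /\ (c k k = 1 -> e = 0%N).
  by have [f hf] := fin_all_exists H; exists f.
move=> k.
case: (eqVneq (c k k) 1) => h; first by exists 0%N; rewrite h expr0.
have [e he] := prim_rootP hz (eqP (etrans (esym (unity_rootE _ _)) (Hr k))).
by exists e; split => // h1; rewrite h1 eqxx in h.
Qed.

Lemma excl_contra (c : 'M[algC]_n) :
  codim_atom (inGmpn m p) c -> (forall a b, a != b -> c a b = 0) ->
  codim c = 2%N -> \det c = 1 -> False.
Proof.
move=> [Gc _ c1 Hat] Hdc hc2 hdet.
have Hr : forall a, c a a != 0.
  move=> a; case: Gc => s [Hs [Hr _]]; case: (eqVneq (s a) a) => sa.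
    by rewrite -{2}sa; apply: (unity_neq0 m0).
  exfalso; have := Hr a; rewrite Hdc ?(eq_sym a) // => /(unity_neq0 m0); rewrite eqxx.
  done.
rewrite diag_codim // in hc2.
have /cards2P [i [j [ij hI]]] : #|[set k | c k k != 1]| == 2%N by rewrite hc2.
have outI : forall k, k != i -> k != j -> c k k = 1.
  move=> k ki kj; apply/eqP; apply/negPn/negP => h.
  have : k \in [set i; j] by rewrite -hI inE.
  by rewrite !inE (negbTE ki) (negbTE kj).
have cij : c i i * c j j = 1.
  rewrite -hdet diag_det // (bigD1 i) //= (bigD1 j) /=; last by rewrite eq_sym.
  by rewrite big1 ?mulr1 // => k /andP [ki kj]; apply: outI.
have x0 : (1 : algC) != 0 by rewrite oner_eq0.
have [tu invt rt t1 _] := T_facts ij x0.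
set t := Tm i j 1 in tu invt rt t1.
have tG : inGmpn m p t by apply: T_inG => //; rewrite expr1n.
have cjj0 := Hr j.
have cii : c i i = (c j j)^-1 by rewrite -[c i i]mulr1 -(mulfV cjj0) mulrA cij mul1r.
have etc : t *m c = Tm i j (c j j).
  apply/matrixP => a b; rewrite (mono_mul _ (T_supp 1 ij)) T_ent // !mxE.
  case: tpermP => [->|->|/eqP ai /eqP aj].
  - rewrite eqxx mul1r; case: (eqVneq b j) => [->|bj]; first by rewrite mul1r.
    by rewrite mul0r Hdc // eq_sym.
  - rewrite eqxx (eq_sym j i) (negbTE ij) invr1 mul1r.
    case: (eqVneq b i) => [->|bi]; first by rewrite mul1r cii.
    by rewrite mul0r Hdc // eq_sym.
  - rewrite (negbTE ai) (negbTE aj) mul1r.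
    case: (eqVneq a b) => [<-|ab]; first by rewrite outI.
    by rewrite Hdc.
have hle : le_codim t c.
  rewrite /le_codim !codimE invt rt etc T_rank // -codimE diag_codim // hc2.
have := Hat t tG (le_codim1 t) hle t1 => /matrixP /(_ i j).
rewrite /t /Tm !mxE !eqxx mulr1 Hdc //; move/eqP; rewrite oner_eq0.
done.
Qed.

End Main.

Section Main.
Variables (m p n : nat) (zeta : algC).
Hypotheses (m0 : (0 < m)%N) (p0 : (0 < p)%N) (n0 : (0 < n)%N) (pm : (p %| m)%N)
  (hz : m.-primitive_root zeta).

Lemma sum_I (c : 'M[algC]_n) (e : 'I_n -> nat) :
  (forall k, c k k = 1 -> e k = 0%N) ->
  (\sum_k e k)%N = (\sum_(k in [set k | c k k != 1%R]) e k)%N.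
Proof.
move=> He; rewrite [RHS]big_mkcond; apply: eq_bigr => k _; rewrite inE.
by case: (eqVneq (c k k) 1) => // /He.
Qed.

Lemma diag_pconn (c : 'M[algC]_n) :
  codim_atom (inGmpn m p) c -> (forall a b, a != b -> c a b = 0) ->
  (forall a, m.-unity_root (c a a)) -> (m %/ p)%N.-unity_root (\prod_k c k k) ->
  pconnected m p zeta c.
Proof.
move=> [Gc _ c1 Hat] Hdc Hr Hp.
split; first by apply/is_diag_mxP => a b ab; apply: Hdc; apply: contra ab => /eqP ->.
split => //.
have [e He] := exps hz Hr.
exists e; split; first by move=> k; case: (He k).
cbv zeta; set I := [set k | c k k != 1].
have prodJ : forall J : {set 'I_n}, \prod_(k in J) c k k = zeta ^+ (\sum_(k in J) e k).
  by move=> J; apply: pow_sum => k; case: (He k).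
split.
  rewrite -(unity_div _ m0 p0 pm hz) -prodJ -prod_I.
  exact: Hp.
move=> J /properP [JI [k kI kJ]] J0; apply/negP => hJ.
have JsubI : {subset J <= I} by apply/subsetP.
pose b : 'M[algC]_n := \matrix_(a, l) if a == l then (if a \in J then c a a else 1) else 0.
have Hdb : forall a l, a != l -> b a l = 0 by move=> a l al; rewrite mxE (negbTE al).
have bdiag : forall a, b a a = if a \in J then c a a else 1 by move=> a; rewrite mxE eqxx.
have Gb : inGmpn m p b.
  exists (1%g : 'S_n); split; first by move=> a l; rewrite perm1 eq_sym; apply: Hdb.
  split.
    move=> a; rewrite perm1 bdiag; case: ifP => _; first exact: Hr.
    by rewrite unity_rootE expr1n.
  have -> : \prod_a b a ((1%g : 'S_n) a) = \prod_(a in J) c a a.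
    rewrite [RHS]big_mkcond /=; apply: eq_bigr => a _; by rewrite perm1 bdiag.
  by rewrite prodJ (unity_div _ m0 p0 pm hz).
have bu := inG_unit m0 Gb.
have b1 : b <> 1%:M.
  move: J0 => /set0Pn [l lJ] /matrixP /(_ l l); rewrite bdiag lJ !mxE eqxx /= => /eqP.
  by have := JsubI _ lJ; rewrite inE => /negbTE ->.
have hle : le_codim b c.
  rewrite /le_codim !codimE; apply: suff_le => //.
    move=> v hv; apply/matrixP => a l; rewrite (diag_mul _ Hdb) bdiag.
    case: ifP => _; last by rewrite mul1r.
    by rewrite -(diag_mul _ Hdc) hv.
  move=> l; case: (boolP (l \in J)) => lJ.
    exists 0, (delta_mx l 0); split; [by rewrite mulmx0 | | by rewrite add0r].
    apply/matrixP => a q; rewrite (diag_mul _ Hdc) (diag_mul _ Hdb) bdiag !mxE.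
    case: (eqVneq a l) => [->|al]; first by rewrite lJ.
    by rewrite !mulr0.
  exists (delta_mx l 0), 0; split; [ | by rewrite !mulmx0 | by rewrite addr0].
  apply/matrixP => a q; rewrite (diag_mul _ Hdb) bdiag !mxE.
  case: (eqVneq a l) => [->|al]; first by rewrite (negbTE lJ) mul1r.
  by rewrite mulr0.
have := Hat b Gb (le_codim1 b) hle b1 => /matrixP /(_ k k).
rewrite bdiag (negbTE kJ) => /esym /eqP.
by move: kI; rewrite inE => /negbTE ->.
Qed.

End Main.

Section Main.
Variables (m p n : nat) (zeta : algC).
Hypotheses (m0 : (0 < m)%N) (p0 : (0 < p)%N) (n0 : (0 < n)%N) (pm : (p %| m)%N)
  (hz : m.-primitive_root zeta).

Lemma pconn_atom (c : 'M[algC]_n) : inGmpn m p c -> pconnected m p zeta c ->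
  ~ (codim c = 2%N /\ \det c = 1) -> codim_atom (inGmpn m p) c.
Proof.
move=> Gc [/is_diag_mxP Hd0 [c1 [e [He [Hsum Hprop]]]]] Hex.
have Hdc : forall a b, a != b -> c a b = 0 by move=> a b ab; apply: Hd0.
set I := [set i | c i i != 1] in Hsum Hprop.
split => //; first exact: le_codim1.
move=> b Gb _ hle b1.
case: (Gb) => s [Hs [Hr Hp]].
have bu := inG_unit m0 Gb.
have hle' := hle; rewrite /le_codim !codimE in hle'.
have dec := decomp bu hle'.
have beta0 : forall a, b a (s a) != 0 by move=> a; apply: (unity_neq0 m0).
have cne0 : forall a, c a a != 0 by move=> a; rewrite He expf_neq0 // (zeta_neq0 m0 hz).
have decat : forall i, exists v w : 'I_n -> algC,
    [/\ forall a, v a = b a (s a) * v (s a),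
        forall a, c a a * w a = b a (s a) * w (s a) &
        forall a, v a + w a = (a == i)%:R].
  move=> i; have [v [w [hv hw hx]]] := dec (delta_mx i 0).
  exists (fun a => v a 0), (fun a => w a 0); split.
  - by move=> a; rewrite -{1}hv (mono_mul _ Hs).
  - by move=> a; rewrite -(diag_mul _ Hdc) hw (mono_mul _ Hs).
  - by move=> a; have := congr1 (fun M : 'cV[algC]_n => M a 0) hx; rewrite !mxE eqxx andbT => <-.
have inI : forall k, (k \in I) = (c k k != 1) by move=> k; rewrite inE.
have step1 : forall i, s i != i -> c i i != 1.
  move=> i si; have [v [w [EV EW EX]]] := decat i.
  apply/negP => /eqP ci1.
  have h : v i + w i = b i (s i) * (v (s i) + w (s i)).
    by rewrite mulrDr -EV -EW ci1 mul1r.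
  by move: h; rewrite EX eqxx EX (negbTE si) mulr0 => /eqP; rewrite oner_eq0.
have step2 : forall i, s i != i -> s (s i) = i.
  move=> i si; apply/eqP/negPn/negP => ssi.
  have sj : s (s i) != s i.
    by apply: contra si => /eqP h; rewrite (perm_inj h).
  have cj1 := step1 _ sj.
  have [v [w [EV EW EX]]] := decat i.
  have wj : w (s i) = - v (s i) by apply/esym/addr0_eq; rewrite EX (negbTE si).
  have wk : w (s (s i)) = - v (s (s i)) by apply/esym/addr0_eq; rewrite EX (negbTE ssi).
  have hvj : v (s i) = 0.
    have h : (c (s i) (s i) - 1) * v (s i) = 0.
      rewrite mulrBl mul1r; apply/eqP; rewrite subr_eq0 -eqr_opp -mulrN -wj EW wk.
      by rewrite mulrN -EV wj.
    by move/eqP: h; rewrite mulf_eq0 subr_eq0 (negbTE cj1) /= => /eqP.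
  have hwi : w i = 0.
    have := EW i; rewrite wj hvj oppr0 mulr0 => /eqP; rewrite mulf_eq0 (negbTE (cne0 i)) /=.
    by move/eqP.
  by move: (EX i); rewrite EV hvj mulr0 hwi addr0 eqxx => /eqP; rewrite eq_sym oner_eq0.
have step3 : forall i, s i = i.
  move=> i; apply/eqP/negPn/negP => si.
  have sj := step2 i si.
  set j := s i in si sj.
  have ij : i != j by rewrite eq_sym.
  have [v [w [EV EW EX]]] := decat i.
  have EVi := EV i; have EVj := EV j; have EWi := EW i; have EWj := EW j.
  rewrite -/j in EVi EWi; rewrite sj in EVj EWj.
  have EXi := EX i; have EXj := EX j; rewrite eqxx in EXi; rewrite (eq_sym j i) (negbTE ij) in EXj.
  have wj : w j = - v j by apply/esym/addr0_eq.
  have vi0 : v i != 0.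
    apply/negP => /eqP vi0.
    have vj0 : v j = 0 by rewrite EVj vi0 mulr0.
    have : c i i * w i = 0 by rewrite EWi wj vj0 oppr0 mulr0.
    move/eqP; rewrite mulf_eq0 (negbTE (cne0 i)) /= => /eqP wi0.
    by move: EXi; rewrite vi0 wi0 addr0 => /eqP; rewrite eq_sym oner_eq0.
  have wi0 : w i != 0.
    apply/negP => /eqP wi0.
    have : c j j * w j = 0 by rewrite EWj wi0 mulr0.
    move/eqP; rewrite mulf_eq0 (negbTE (cne0 j)) /= wj oppr_eq0 => /eqP vj0.
    by move: EXi; rewrite EVi vj0 mulr0 wi0 addr0 => /eqP; rewrite eq_sym oner_eq0.
  have P1 : b i j * b j i = 1.
    have h : (1 - b i j * b j i) * v i = 0.
      by rewrite mulrBl mul1r -mulrA -EVj -EVi subrr.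
    by move/eqP: h; rewrite mulf_eq0 (negbTE vi0) orbF subr_eq0 => /eqP <-.
  have cij : c i i * c j j = 1.
    have h : (c i i * c j j - 1) * w i = 0.
      rewrite mulrBl mul1r [c i i * _]mulrC -mulrA EWi mulrCA EWj mulrA P1 mul1r subrr //.
    by move/eqP: h; rewrite mulf_eq0 (negbTE wi0) orbF subr_eq0 => /eqP.
  have pe : (p %| e i + e j)%N.
    apply: dvdn_trans pm _; rewrite (prim_order_dvd hz) exprD -!He cij //.
  have iI : i \in I by rewrite inI step1.
  have jI : j \in I by rewrite inI step1 // sj.
  have JI : [set i; j] \subset I by apply/subsetP => k; rewrite in_set2 => /orP [] /eqP ->.
  have sumJ : (\sum_(k in [set i; j]) e k = e i + e j)%N.
    by rewrite big_setU1 ?inE //= big_set1.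
  move: JI; rewrite subEproper => /orP [/eqP JI | JP].
    apply: Hex; split.
      by rewrite diag_codim // -/I -JI cards2 ij.
    by rewrite diag_det // prod_I -/I -JI big_setU1 ?inE //= big_set1.
  have J0 : [set i; j] != set0 by apply/set0Pn; exists i; rewrite !inE eqxx.
  by have := Hprop _ JP J0; rewrite sumJ pe.
have Hdb : forall a l, a != l -> b a l = 0.
  by move=> a l al; apply: Hs; rewrite step3 eq_sym.
have bk : forall k, b k k != 1 -> b k k = c k k.
  move=> k bk1; have [v [w [EV EW EX]]] := decat k.
  have EVk := EV k; have EWk := EW k; have EXk := EX k.
  rewrite step3 in EVk EWk; rewrite eqxx in EXk.
  have vk0 : v k = 0.
    have h : (1 - b k k) * v k = 0 by rewrite mulrBl mul1r -EVk subrr.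
    by move/eqP: h; rewrite mulf_eq0 subr_eq0 eq_sym (negbTE bk1) /= => /eqP.
  rewrite vk0 add0r in EXk.
  by move: EWk; rewrite EXk !mulr1.
set Jb := [set k | b k k != 1].
have JbI : Jb \subset I.
  by apply/subsetP => k; rewrite !inE => h; rewrite -bk.
have pJb : (p %| \sum_(k in Jb) e k)%N.
  rewrite -(unity_div _ m0 p0 pm hz) -(pow_sum (F := fun k => c k k)) //.
  have <- : \prod_(k in Jb) b k k = \prod_(k in Jb) c k k.
    by apply: eq_bigr => k; rewrite inE => /bk.
  by rewrite -prod_I; have := Hp; under eq_bigr do rewrite step3.
have Jb0 : Jb != set0.
  apply/negP => /eqP Jb0; apply: b1; apply/matrixP => a l; rewrite !mxE.
  case: (eqVneq a l) => [<-|al]; last by rewrite Hdb.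
  have : a \notin Jb by rewrite Jb0 inE.
  by rewrite inE negbK => /eqP.
move: JbI; rewrite subEproper => /orP [/eqP JbI | JP]; last first.
  by have := Hprop _ JP Jb0; rewrite pJb.
apply/matrixP => a l; case: (eqVneq a l) => [<-|al]; last by rewrite Hdb // Hdc.
case: (boolP (a \in Jb)) => aJ; first by apply: bk; rewrite inE in aJ.
have : a \notin I by rewrite -JbI.
by move: aJ; rewrite !inE !negbK => /eqP -> /eqP ->.
Qed.

End Main.

Theorem mainTheorem7 (m p n : nat) (zeta : algC) :
  (0 < m)%N -> (0 < p)%N -> (0 < n)%N -> (p %| m)%N ->
  m.-primitive_root zeta ->
  forall g : 'M[algC]_n,
    codim_atom (inGmpn m p) g <->
    (inGmpn m p g /\
     (reflection g \/
      (pconnected m p zeta g /\ ~ (codim g = 2%N /\ \det g = 1)))).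
Proof.
move=> m0 p0 n0 pm hz g; split.
  move=> Hat; have Gg : inGmpn m p g by case: Hat.
  case: (Gg) => s [Hs [Hr Hp]]; split => //.
  case: (pickP (fun a => s a != a)) => [i si | alls].
    by left; apply: (nondiag_case m0 p0 n0 pm hz Hat Hs Hr si).
  have sa : forall a, s a = a by move=> a; apply/eqP; rewrite -[_ == _]negbK alls.
  have Hdc : forall a b, a != b -> g a b = 0.
    by move=> a b ab; apply: Hs; rewrite sa eq_sym.
  right; split.
    apply: (diag_pconn m0 p0 pm hz Hat Hdc).
      by move=> a; have := Hr a; rewrite sa.
    by have := Hp; under eq_bigr do rewrite sa.
  by move=> [h2 hd]; apply: (excl_contra m0 Hat Hdc h2 hd).
move=> [Gg [hr | [pc ex]]].
  exact: (refl_atom m0 p0 n0 pm hz Gg hr).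
exact: (pconn_atom m0 p0 pm hz Gg pc ex).
Qed.
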